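(* Let $r\ge 3$, $\varepsilon>0$, and let $G$ be an $n$-vertex $K_r$-free graph such that for every pair of non-adjacent vertices $u,v\in V(G)$, the induced subgraph $G[N(u)\cap N(v)]$ contains at least $\varepsilon n^{r-2}$ copies of $K_{r-2}$. Then $G=F[\cdot]$ for some maximal $K_r$-free graph $F$ on at most $2^{O((\frac{1}{\varepsilon}+r)\log\frac{1}{\varepsilon})}$ vertices, where the implied constant in the $O(\cdot)$ is absolute.
   Context: $G=F[\cdot]$ means that $G$ is a blow-up of $F$: $G$ is obtained from $F$ by replacing each vertex $x$ of $F$ by an independent set $V_x$ (of some positive size, sizes may differ) and each edge $xy$ of $F$ by a complete bipartite graph between $V_x$ and $V_y$, with no other edges. A graph $F$ is maximal $K_r$-free if it is $K_r$-free and adding any new edge creates a copy of $K_r$. Logarithms are natural. *)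

(* Defs.v *)
From HB Require Import structures.
From mathcomp Require Import all_boot all_order all_algebra.
From mathcomp Require Import all_classical all_reals all_analysis.
From mathcomp Require Import Rstruct Rstruct_topology.
Set Implicit Arguments. Unset Strict Implicit. Unset Printing Implicit Defensive.
Import Order.TTheory GRing.Theory Num.Theory.

Definition simple_graph (T : finType) (e : rel T) : Prop :=
  symmetric e /\ irreflexive e.

Definition nbhd (T : finType) (e : rel T) (u : T) : {set T} := [set w | e u w].

Definition is_clique (T : finType) (e : rel T) (A : {set T}) : bool :=
  [forall x in A, forall y in A, (x != y) ==> e x y].

Definition Kr_free (T : finType) (e : rel T) (r : nat) : Prop :=
  forall A : {set T}, is_clique e A -> #|A| != r.

Definition add_edge (T : finType) (e : rel T) (x y : T) : rel T :=
  fun a b => [|| e a b, (a == x) && (b == y) | (a == y) && (b == x)].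

Definition maximal_Kr_free (T : finType) (e : rel T) (r : nat) : Prop :=
  Kr_free e r /\
  forall x y : T, x != y -> ~~ e x y ->
    exists A : {set T}, is_clique (add_edge e x y) A /\ #|A| = r.

Definition num_cliques_in (T : finType) (e : rel T) (S : {set T}) (k : nat) : nat :=
  #|[set A : {set T} | [&& A \subset S, is_clique e A & #|A| == k]]|.

(* Since f is irreflexive, each class is an
   independent set, and classes of adjacent vertices are completely joined. *)
Definition is_blowup_of (T U : finType) (e : rel T) (f : rel U) : Prop :=
  exists phi : T -> U,
    (forall u : U, exists x : T, phi x = u) /\
    (forall x y : T, e x y = f (phi x) (phi y)).

(* Main.v *)
Require Import Defs.
From HB Require Import structures.
From mathcomp Require Import all_boot all_order all_algebra.
From mathcomp Require Import all_classical all_reals all_analysis.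
From mathcomp Require Import Rstruct Rstruct_topology.
From mathcomp Require Import fintype finset.
From Stdlib Require Import Lia.
From mathcomp Require Import zify.
From mathcomp Require Import ring.
Import Order.TTheory GRing.Theory Num.Theory.
Set Implicit Arguments. Unset Strict Implicit. Unset Printing Implicit Defensive.

Lemma leq_expr m n k : (m <= n)%N -> (m ^ k <= n ^ k)%N.
Proof. by move=> h; elim: k => [|k IH] //; rewrite !expnS leq_mul. Qed.

Lemma ffact_le_exp n j : (n ^_ j <= n ^ j)%N.
Proof.
elim: j n => [|j IH] n; first by rewrite ffactn0 expn0.
rewrite ffactnS expnS leq_mul2l; case: n => [|n] //=.
by apply: leq_trans (IH n) _; apply: leq_expr.
Qed.

Lemma bin_fact_le n j : ('C(n, j) * j`! <= n ^ j)%N.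
Proof. by rewrite bin_ffact ffact_le_exp. Qed.

Lemma bin_le_exp n j : ('C(n, j) <= n ^ j)%N.
Proof. apply: leq_trans (bin_fact_le n j); by rewrite leq_pmulr ?fact_gt0. Qed.

Lemma subset_card_exact (T : finType) (A : {set T}) k :
  (k <= #|A|)%N -> exists B : {set T}, B \subset A /\ #|B| = k.
Proof.
move=> hk; move: {2}#|A| (erefl #|A|) => m; elim: m A hk => [|m IH] A hk hA.
  by exists A; split => //; move: hk; rewrite hA leqn0 => /eqP ->.
case: (ltnP k #|A|) => hlt; last first.
  by exists A; split => //; apply/eqP; rewrite eqn_leq hk hlt.
have : (0 < #|A|)%N by rewrite hA.
case/card_gt0P => x xA.
have hc : #|A :\ x| = m by move: (cardsD1 x A); rewrite xA hA add1n => -[].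
have hk' : (k <= #|A :\ x|)%N by rewrite hc -ltnS -hA.
have [B [sB cB]] := IH (A :\ x) hk' hc.
exists B; split; last by []. exact: (fintype.subset_trans sB (subD1set _ _)).
Qed.

Section Cliques.
Variables (T : finType) (e : rel T).
Hypothesis esym : symmetric e.
Hypothesis eirr : irreflexive e.

Lemma clique_sub (A B : {set T}) : B \subset A -> is_clique e A -> is_clique e B.
Proof.
move=> sBA /forallP hA; apply/forallP => x; apply/implyP => xB.
apply/forallP => y; apply/implyP => yB.
by move: (hA x) => /implyP /(_ (subsetP sBA x xB)) /forallP /(_ y) /implyP
  /(_ (subsetP sBA y yB)).
Qed.

Lemma cliqueP (A : {set T}) :
  reflect (forall x y, x \in A -> y \in A -> x != y -> e x y) (is_clique e A).
Proof.
apply: (iffP forallP).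
  move=> h x y xA yA nxy; move: (h x) => /implyP /(_ xA) /forallP /(_ y)
    /implyP /(_ yA) /implyP; exact.
move=> h x; apply/implyP => xA; apply/forallP => y; apply/implyP => yA.
by apply/implyP; apply: h.
Qed.

Lemma clique_add x (A : {set T}) : is_clique e A ->
  (forall a, a \in A -> a != x -> e x a) -> is_clique e (x |: A).
Proof.
move=> /cliqueP hA hx; apply/cliqueP => a b; rewrite !in_setU1.
case/orP => [/eqP -> | aA]; case/orP => [/eqP -> | bA].
- by rewrite eqxx.
- by move=> nxb; apply: hx => //; rewrite eq_sym.
- by move=> nax; rewrite esym; apply: hx.
- exact: hA.
Qed.

Lemma Kr_free_lt r (A : {set T}) : Kr_free e r -> is_clique e A -> (#|A| < r)%N.
Proof.
move=> hf hA; rewrite ltnNge; apply/negP => hr.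
have [B [sB cB]] := subset_card_exact hr.
by move: (hf B (clique_sub sB hA)); rewrite cB eqxx.
Qed.

Definition cl (S : {set T}) (j : nat) : {set {set T}} :=
  [set A : {set T} | [&& A \subset S, is_clique e A & #|A| == j]].

Lemma num_cliquesE S j : num_cliques_in e S j = #|cl S j|.
Proof. by []. Qed.

Lemma cl_le S j : (#|cl S j| <= #|T| ^ j)%N.
Proof.
apply: leq_trans (bin_le_exp _ _); rewrite -card_draws.
by apply: subset_leq_card; apply/subsetP => A; rewrite !inE => /and3P[_ _ ->].
Qed.

Lemma cl_fact S j : (#|cl S j| * j`! <= #|T| ^ j)%N.
Proof.
apply: leq_trans (bin_fact_le _ _); rewrite leq_mul2r -card_draws; apply/orP; right.
by apply: subset_leq_card; apply/subsetP => A; rewrite !inE => /and3P[_ _ ->].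
Qed.

Lemma through_le z j :
  (#|[set K : {set T} | (z \in K) && (#|K| == j.+1)]| <= #|T| ^ j)%N.
Proof.
apply: leq_trans (bin_le_exp #|T| j); rewrite -card_draws.
set X := [set K : {set T} | _].
have <- : #|[set K :\ z | K in X]| = #|X|.
  apply: card_in_imset => K1 K2; rewrite !inE => /andP[z1 _] /andP[z2 _] h.
  by rewrite -(setD1K z1) -(setD1K z2) h.
apply: subset_leq_card; apply/subsetP => B /imsetP[K]; rewrite !inE.
move=> /andP[zK /eqP cK] ->; move: (cardsD1 z K); rewrite zK cK add1n => -[->].
by [].
Qed.

End Cliques.


Lemma card_bigcup_le (I T : finType) (P : {pred I}) (F : I -> {set T}) :
  (#|\bigcup_(i | P i) F i| <= \sum_(i | P i) #|F i|)%N.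
Proof.
elim/big_rec2: _ => [|i X n _ IH]; first by rewrite cards0.
by apply: leq_trans (leq_card_setU _ _) _; rewrite leq_add2l.
Qed.

Lemma sum_disjoint_le (I T : finType) (P : {pred I}) (F : I -> {set T})
  (W : {set T}) :
  (forall i, P i -> F i \subset W) ->
  (forall i i' x, P i -> P i' -> x \in F i -> x \in F i' -> i = i') ->
  (\sum_(i | P i) #|F i| <= #|W|)%N.
Proof.
move=> sub dis.
have -> : \sum_(i | P i) #|F i| = \sum_(i | P i) \sum_(x in W) (x \in F i : nat).
  apply: eq_bigr => i Pi; rewrite -big_mkcondr /=.
  rewrite (eq_bigl (fun x => x \in F i)); first by rewrite sum1_card.
  move=> x /=; case xF: (x \in F i); rewrite ?andbF ?andbT //.
  exact: (subsetP (sub i Pi)).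
rewrite bigop.exchange_big /= -sum1_card; apply: leq_sum => x xW.
case: (pickP [pred i | P i && (x \in F i)]) => [i /andP[Pi xi] | none].
  rewrite (bigD1 i) //= xi big1 // => i' /andP[Pi' ni'].
  by case xi': (x \in F i') => //; move: ni'; rewrite (dis _ _ _ Pi' Pi xi' xi) eqxx.
by rewrite big1 // => i Pi; move: (none i); rewrite /= Pi /=; case: (x \in F i).
Qed.

Lemma sample_exists (I T : finType) (s : nat) (P : {pred I}) (D : I -> {set T}) :
  (\sum_(i | P i) (#|T| - #|D i|) ^ s < #|T| ^ s)%N ->
  exists f : {ffun 'I_s -> T}, forall i, P i -> exists t, f t \in D i.
Proof.
move=> hlt.
set bad := [set f : {ffun 'I_s -> T} |
  [exists i, P i && [forall t, f t \notin D i]]].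
have hb : (#|bad| < #|T| ^ s)%N.
  apply: leq_ltn_trans hlt.
  have sb : bad \subset \bigcup_(i | P i) [set f : {ffun 'I_s -> T} | f \in ffun_on (~: D i)].
    apply/subsetP => f; rewrite inE => /existsP[i /andP[Pi /forallP hf]].
    apply/bigcupP; exists i => //; rewrite inE; apply/ffun_onP => t.
    by rewrite inE hf.
  apply: leq_trans (subset_leq_card sb) _; apply: leq_trans (card_bigcup_le _ _) _.
  apply: leq_sum => i _; rewrite cardsE card_ffun_on card_ord cardsCs setCK.
  by [].
have : bad \proper setT.
  by rewrite properEcard subsetT cardsT card_ffun card_ord.
case/properP => _ [f _]; rewrite inE negb_exists => /forallP hf.
exists f => i Pi; move: (hf i); rewrite Pi /= negb_forall => /existsP[t].
by rewrite negbK => ?; exists t.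
Qed.


Section Pajor.
Variable T : finType.

Lemma setD1K_not (p : T) (A : {set T}) : p \notin A -> A :\ p = A.
Proof.
move=> pA; apply/setP => x; rewrite !inE; case: eqP => // ->.
by rewrite (negbTE pA).
Qed.

Definition shatters (F : {set {set T}}) (Y : {set T}) : bool :=
  [forall B : {set T}, (B \subset Y) ==> [exists A in F, A :&: Y == B]].

Definition shset (F : {set {set T}}) := [set Y | shatters F Y].

Lemma shattersP (F : {set {set T}}) (Y : {set T}) :
  reflect (forall B : {set T}, B \subset Y -> exists2 A, A \in F & A :&: Y = B)
  (shatters F Y).
Proof.
apply: (iffP forallP) => h.
  move=> B sB; move: (h B); rewrite sB /= => /existsP[A /andP[AF /eqP]].
  by exists A.
move=> B; apply/implyP => sB; have [A AF hA] := h B sB.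
by apply/existsP; exists A; rewrite AF hA eqxx.
Qed.

Lemma shatters_sub (F : {set {set T}}) (Y : {set T}) : shatters F Y -> exists2 A, A \in F & Y \subset A.
Proof.
move/shattersP => /(_ Y (subxx _)) [A AF hA]; exists A => //.
by rewrite -hA subsetIl.
Qed.

Lemma pajor_ind n : forall (U : {set T}) (F : {set {set T}}), #|U| = n ->
  (forall A, A \in F -> A \subset U) -> (#|F| <= #|shset F|)%N.
Proof.
elim: n => [|n IH] U F hU hF.
  move/eqP: hU; rewrite cards_eq0 => /eqP U0.
  have F0 : F \subset [set set0].
    apply/subsetP => A AF; rewrite inE; move: (hF A AF); rewrite U0.
    by rewrite subset0.
  case: (set_0Vmem F) => [-> | [A AF]]; first by rewrite cards0.
  apply: leq_trans (subset_leq_card F0) _; rewrite cards1 card_gt0.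
  apply/set0Pn; exists set0; rewrite inE; apply/shattersP => B sB.
  exists A => //; move: sB; rewrite subset0 => /eqP ->; by rewrite setI0.
have : (0 < #|U|)%N by rewrite hU.
case/card_gt0P => p pU.
have hU' : #|U :\ p| = n by move: (cardsD1 p U); rewrite pU hU add1n => -[].
set F1 := [set A :\ p | A in F].
set F2 := [set A in F | (p \notin A) && (p |: A \in F)].
have sU' : forall A, A \in F -> A :\ p \subset U :\ p.
  by move=> A AF; apply: setSD; apply: hF.
have h1 : (#|F1| <= #|shset F1|)%N.
  apply: (IH (U :\ p)) => // A' /imsetP[A AF ->]; exact: sU'.
have h2 : (#|F2| <= #|shset F2|)%N.
  apply: (IH (U :\ p)) => // A; rewrite inE => /and3P[AF pA _].
  by rewrite -(setD1K_not pA); move: (sU' A AF); rewrite setD1K_not.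
set Fn := [set A in F | p \notin A].
set Fp := [set A in F | p \in A].
have cF : #|F| = (#|Fn| + #|Fp|)%N.
  rewrite -(cardsID [set A : {set T} | p \in A] F) addnC; congr (_ + _)%N.
    by apply: eq_card => A; rewrite !inE andbC.
  by apply: eq_card => A; rewrite !inE andbC.
have eF1 : F1 = Fn :|: [set A :\ p | A in Fp].
  apply/setP => B; apply/imsetP/setUP.
    case=> A AF ->; case pA: (p \in A).
      by right; apply/imsetP; exists A => //; rewrite inE AF pA.
    by left; rewrite inE setD1K_not ?pA // AF.
  case=> [| /imsetP[A] ]; last by rewrite inE => /andP[AF _] ->; exists A.
  rewrite inE => /andP[BF pB]; exists B => //; by rewrite setD1K_not.
have eF2 : F2 = Fn :&: [set A :\ p | A in Fp].
  apply/setP => B; rewrite !inE; apply/idP/idP.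
    move=> /and3P[BF pB pBF]; rewrite BF pB /=; apply/imsetP; exists (p |: B).
      by rewrite inE pBF setU11.
    by rewrite setU1K.
  move=> /andP[/andP[BF pB] /imsetP[A]]; rewrite inE => /andP[AF pA] eB; subst B.
  by rewrite BF (setD1K pA) AF !inE eqxx.
have cimg : #|[set A :\ p | A in Fp]| = #|Fp|.
  apply: card_in_imset => A1 A2; rewrite !inE => /andP[_ p1] /andP[_ p2] h.
  by rewrite -(setD1K p1) -(setD1K p2) h.
have cF12 : #|F| = (#|F1| + #|F2|)%N.
  by rewrite cF eF1 eF2 cardsUI cimg.
have s1 : forall Y, Y \in shset F1 -> (p \notin Y) && (Y \in shset F).
  move=> Y; rewrite !inE => hY; have [A' /imsetP[A AF ->] sY] := shatters_sub hY.
  have pY : p \notin Y.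
    by apply/negP => /(subsetP sY); rewrite !inE eqxx.
  rewrite pY /=; apply/shattersP => B sB; have [A1 /imsetP[A2 AF2 ->] hA] := (shattersP _ _ hY) B sB.
  exists A2 => //; rewrite -hA; apply/setP => x; rewrite !inE.
  by case xY: (x \in Y); rewrite ?andbF ?andbT //; case: eqP => // exp; move: pY; rewrite -exp xY.
have s2 : forall Y, Y \in shset F2 -> (p \notin Y) && (p |: Y \in shset F).
  move=> Y; rewrite !inE => hY; have [A AF2 sY] := shatters_sub hY.
  have pY : p \notin Y.
    apply/negP => /(subsetP sY); move: AF2; rewrite inE => /and3P[_ pA _] pA'.
    by rewrite pA' in pA.
  rewrite pY /=; apply/shattersP => B sB.
  case pB: (p \in B).
    have sB' : B :\ p \subset Y.
      apply/subsetP => x; rewrite !inE => /andP[xp xB].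
      by move: (subsetP sB x xB); rewrite !inE (negbTE xp).
    have [A1 A1F hA1] := (shattersP _ _ hY) _ sB'.
    move: A1F; rewrite inE => /and3P[_ pA1 pA1F].
    exists (p |: A1) => //; rewrite -setUIr hA1 setD1K //.
  have sB' : B \subset Y.
    apply/subsetP => x xB; move: (subsetP sB x xB); rewrite !inE.
    by case: eqP => // exp; move: pB; rewrite -exp xB.
  have [A1 A1F hA1] := (shattersP _ _ hY) _ sB'.
  move: (A1F); rewrite inE => /and3P[A1F' pA1 _].
  exists A1 => //; rewrite setIUr hA1.
  have -> : A1 :&: [set p] = set0.
    by apply/setP => x; rewrite !inE; case: (x =P p) => [-> | _]; rewrite ?andbF ?andbT ?(negbTE pA1).
  by rewrite set0U.
have sub : shset F1 :|: [set p |: Y | Y in shset F2] \subset shset F.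
  apply/subsetP => Y /setUP[/s1/andP[] // | /imsetP[Y' /s2/andP[_ h] ->]] //.
have disj : shset F1 :&: [set p |: Y | Y in shset F2] = set0.
  apply/setP => Y; rewrite in_setI in_set0; apply/negP => /andP[/s1/andP[pY _] /imsetP[Y' _ eY]].
  by rewrite eY setU11 in pY.
have cimg2 : #|[set p |: Y | Y in shset F2]| = #|shset F2|.
  apply: card_in_imset => Y1 Y2 /s2/andP[p1 _] /s2/andP[p2 _] h.
  by rewrite -(setU1K p1) -(setU1K p2) h.
apply: leq_trans (subset_leq_card sub).
have := cardsUI (shset F1) [set p |: Y | Y in shset F2].
rewrite disj cards0 addn0 => ->.
by rewrite cimg2 cF12 leq_add.
Qed.

Lemma pajor (F : {set {set T}}) : (#|F| <= #|shset F|)%N.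
Proof. by apply: (@pajor_ind #|[set: T]| [set: T]) => // A _; exact: subsetT. Qed.

Lemma small_subsets (S : {set T}) (d : nat) :
  (#|[set Y : {set T} | (Y \subset S) && (#|Y| <= d)%N]| <= (#|S|.+1) ^ d)%N.
Proof.
elim: d => [|d IH].
  rewrite expn0; apply: leq_trans (_ : #|[set (set0 : {set T})]| <= 1)%N; last by rewrite cards1.
  apply: subset_leq_card; apply/subsetP => Y; rewrite !inE leqn0 cards_eq0.
  by case/andP.
set Sd := [set Y : {set T} | (Y \subset S) && (#|Y| <= d)%N] in IH *.
set Sd1 := [set Y : {set T} | (Y \subset S) && (#|Y| <= d.+1)%N].
have sub : Sd1 \subset Sd :|: \bigcup_(x in S) [set x |: Y | Y in Sd].
  apply/subsetP => Y; rewrite inE => /andP[sY cY].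
  case: (set_0Vmem Y) => [-> | [x xY]].
    by rewrite inE; apply/orP; left; rewrite inE sub0set cards0.
  apply/setUP; right; apply/bigcupP; exists x; first exact: (subsetP sY).
  apply/imsetP; exists (Y :\ x); last by rewrite setD1K.
  rewrite inE; apply/andP; split.
    by apply: fintype.subset_trans sY; exact: subD1set.
  by move: (cardsD1 x Y); rewrite xY add1n => hc; move: cY; rewrite hc.
apply: leq_trans (subset_leq_card sub) _.
apply: leq_trans (leq_card_setU _ _) _.
apply: leq_trans (leq_add (leqnn _) (card_bigcup_le _ _)) _.
have hs : (\sum_(x in S) #|[set x |: Y | Y in Sd]| <= \sum_(x in S) #|Sd|)%N.
  by apply: leq_sum => x _; apply: leq_imset_card.
apply: leq_trans (leq_add (leqnn _) hs) _.
rewrite sum_nat_const -mulSn expnS; apply: leq_mul => //.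
Qed.

End Pajor.


Lemma leq_expr5 m n k : (m <= n)%N -> (m ^ k <= n ^ k)%N.
Proof. by move=> h; elim: k => [|k IH] //; rewrite !expnS leq_mul. Qed.

Lemma bern_aux k m : (k ^ m * (k + m) <= (k.+1) ^ m * k)%N.
Proof.
elim: m => [|m IH]; first by rewrite !expn0 addn0.
rewrite !expnS; move: IH; set a := (k ^ m)%N; set b := (k.+1 ^ m)%N => IH.
have h1 : (k * a * (k + m.+1) <= k.+1 * (a * (k + m)))%N by nia.
apply: leq_trans h1 _; rewrite -mulnA leq_mul2l IH orbT //.
Qed.

Lemma bern k : (0 < k)%N -> (2 * k ^ k <= (k.+1) ^ k)%N.
Proof.
move=> hk; have := bern_aux k k.
rewrite addnn -mul2n mulnA [(_ * 2)%N]mulnC leq_pmul2r //.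
Qed.

Lemma bern_pow k t : (0 < k)%N -> (2 ^ t * k ^ (k * t) <= (k.+1) ^ (k * t))%N.
Proof.
move=> hk; rewrite !expnM -expnMn; apply: leq_expr5; exact: bern.
Qed.

Lemma ar1 k r L q : (2 <= k)%N -> (3 <= r)%N -> (r <= k + 2)%N ->
  q = (16 * (k + r) * L)%N -> (q <= 48 * k * L)%N.
Proof. move=> *; nia. Qed.
Lemma ar2 k q : (2 <= k)%N -> (1 <= q)%N -> ((k * (2 * q + 1)).+1 <= 4 * k * q)%N.
Proof. move=> *; nia. Qed.
Lemma ar3 k q L : (q <= 48 * k * L)%N -> (4 * k * q <= 192 * (k * k * L))%N.
Proof. move=> *; nia. Qed.
Lemma ar4 k r L : (2 <= k)%N -> (3 <= r)%N -> (2 <= L)%N ->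
  ((3 * L + 8) * (k + r.-1) < 16 * (k + r) * L)%N.
Proof. move=> *; nia. Qed.
Lemma ar5 k r L : (2 <= k)%N -> (3 <= r)%N -> (2 <= L)%N -> (1 <= 16 * (k + r) * L)%N.
Proof. move=> *; nia. Qed.

Lemma arith k r L : (2 <= k)%N -> (3 <= r)%N -> (r <= k + 2)%N -> (k < 2 ^ L)%N ->
  (2 <= L)%N ->
  ((k * (2 * (16 * (k + r) * L) + 1)).+1 ^ (k + r.-1) < 2 ^ (16 * (k + r) * L))%N.
Proof.
move=> hk hr hrk hkL hL.
have hLX : (L < 2 ^ L)%N by apply: ltn_expl.
have hq := ar1 (L:=L) hk hr hrk (erefl _).
have hq1 := ar5 (k:=k) (r:=r) (L:=L) hk hr hL.
have h4 := ar4 (k:=k) (r:=r) (L:=L) hk hr hL.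
set q := (16 * (k + r) * L)%N in hq hq1 h4 *.
have base : ((k * (2 * q + 1)).+1 <= 2 ^ (3 * L + 8))%N.
  have -> : (2 ^ (3 * L + 8) = 256 * (2 ^ L * 2 ^ L * 2 ^ L))%N.
    by rewrite expnD (mulnC 3 L) expnM mulnC; congr (_ * _)%N; rewrite !expnS expn0 muln1 mulnA.
  have h1 := ar2 hk hq1.
  have h2 := ar3 hq.
  have h3 : (k * k * L <= 2 ^ L * 2 ^ L * 2 ^ L)%N.
    by apply: leq_mul; [apply: leq_mul|]; apply: ltnW.
  move: h1 h2 h3; clear; move: (2 ^ L)%N (k * (2 * q + 1))%N (4 * k * q)%N (k * k * L)%N.
  move=> X a b c h1 h2 h3; lia.
have hb := leq_expr5 (k + r.-1)%N base.
apply: (leq_ltn_trans hb).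
by rewrite -expnM ltn_exp2l.
Qed.

Lemma ar6 n k d : (n <= k.+1 * d)%N -> ((n - d) * k.+1 <= k * n)%N.
Proof. move=> *; nia. Qed.

Local Open Scope ring_scope.


Section Graph.
Variables (T : finType) (e : rel T) (r : nat) (eps : Rdefinitions.R).
Hypothesis esym : symmetric e.
Hypothesis eirr : irreflexive e.
Hypothesis hr : (3 <= r)%N.
Hypothesis heps : 0 < eps.
Hypothesis hfree : Kr_free e r.
Hypothesis hdense : forall u v : T, u != v -> ~~ e u v ->
       eps * (#|T|%:R) ^+ (r - 2) <=
         (num_cliques_in e (nbhd e u :&: nbhd e v) (r - 2))%:R.

Local Notation N := (nbhd e).
Local Notation j := (r - 2)%N.
Local Notation n := #|T|.

Lemma inN x y : (y \in N x) = e x y.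
Proof. by rewrite inE. Qed.

Lemma notinN x : x \notin N x.
Proof. by rewrite inN eirr. Qed.

Lemma no_ext x w (K : {set T}) : e x w -> K \subset N x :&: N w ->
  is_clique e K -> #|K| = j -> False.
Proof.
move=> exw sK cK hK.
have xK : x \notin K.
  by apply/negP => /(subsetP sK); rewrite inE (negbTE (notinN x)).
have wK : w \notin K.
  by apply/negP => /(subsetP sK); rewrite inE (negbTE (notinN w)) andbF.
have xw : x \notin w |: K.
  rewrite !inE negb_or xK andbT; apply/negP => /eqP exw'.
  by move: exw; rewrite exw' eirr.
have c1 : is_clique e (w |: K).
  apply: clique_add => // a aK _; move: (subsetP sK a aK); rewrite !inE.
  by case/andP.
have c2 : is_clique e (x |: (w |: K)).
  apply: clique_add => // a; rewrite !inE => /orP[/eqP -> _ | aK _] //.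
  by move: (subsetP sK a aK); rewrite !inE => /andP[].
have := Kr_free_lt hfree c2.
rewrite !cardsU1 xw wK hK /=; lia.
Qed.

Lemma n_pos (u : T) : (0 < n)%N.
Proof. by apply/card_gt0P; exists u. Qed.

Lemma exists_clique u v : u != v -> ~~ e u v ->
  exists K, K \in cl e (N u :&: N v) j.
Proof.
move=> uv euv; have := hdense uv euv.
have hp : 0 < eps * (n%:R) ^+ j.
  by rewrite mulr_gt0 // exprn_gt0 // ltr0n (n_pos u).
move=> h; have := lt_le_trans hp h; rewrite ltr0n num_cliquesE.
by case/card_gt0P => K KK; exists K.
Qed.

Definition symd x y := (N x :\: N y) :|: (N y :\: N x).

Lemma sep_core x y w : w \in N x -> w \notin N y -> w != y ->
  eps * n%:R <= #|N y :\: N x|%:R.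
Proof.
move=> wx wy wny.
have ewy : ~~ e y w by rewrite -inN.
have yw : y != w by rewrite eq_sym.
have hd := hdense yw ewy.
set D := N y :\: N x.
have jS : j = (r - 3).+1 by lia.
have sub : cl e (N y :&: N w) j \subset
    \bigcup_(z in D) [set K : {set T} | (z \in K) && (#|K| == (r - 3).+1)].
  apply/subsetP => K; rewrite inE => /and3P[sK cK /eqP hK].
  case: (boolP [exists z in K, z \in D]) => [/existsP[z /andP[zK zD]] | nz].
    by apply/bigcupP; exists z => //; rewrite inE zK hK jS eqxx.
  exfalso; apply: (no_ext (x:=x) (w:=w) _ _ cK hK); first by rewrite -inN.
  apply/subsetP => a aK; move: (subsetP sK a aK); rewrite !inE => /andP[ya wa].
  rewrite wa andbT; apply/negPn/negP => nxa; move/existsP: nz; apply.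
  by exists a; rewrite aK /D !inE nxa ya.
have hc : (#|cl e (N y :&: N w) j| <= #|D| * n ^ (r - 3))%N.
  apply: leq_trans (subset_leq_card sub) _.
  apply: leq_trans (card_bigcup_le _ _) _.
  rewrite -sum_nat_const; apply: leq_sum => z _; exact: through_le.
have hn : (0 < n)%N := n_pos x.
move: hd; rewrite num_cliquesE => hd.
have : eps * n%:R ^+ j <= (#|D| * n ^ (r - 3))%:R.
  by apply: le_trans hd _; rewrite ler_nat.
rewrite jS natrM natrX => h.
rewrite -(ler_pM2r (_ : 0 < (n%:R) ^+ (r - 3))) ?exprn_gt0 ?ltr0n //.
by rewrite -mulrA -exprS.
Qed.


Lemma sep x y w : w \in symd x y -> w != x -> w != y ->
  eps * n%:R <= #|symd x y|%:R.
Proof.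
move=> wD wx wy; rewrite /symd.
case/setUP: wD; rewrite inE => /andP[h1 h2].
- apply: le_trans (sep_core h2 h1 wy) _; rewrite ler_nat.
  by apply: subset_leq_card; exact: subsetUr.
- apply: le_trans (sep_core h2 h1 wx) _; rewrite ler_nat.
  by apply: subset_leq_card; exact: subsetUl.
Qed.

Definition univ x := [forall z, (z != x) ==> e x z].

Lemma univ_of x y : e x y ->
  (forall z, z != x -> z != y -> (z \in N x) = (z \in N y)) -> univ x.
Proof.
move=> exy hz; apply/forallP => z; apply/implyP => zx.
apply/negPn/negP => exz.
have xz : x != z by rewrite eq_sym.
have [K] := exists_clique xz exz.
rewrite inE => /and3P[sK cK /eqP hK].
apply: (no_ext exy _ cK hK); apply/subsetP => a aK.
move: (subsetP sK a aK); rewrite !inE => /andP[xa za]; rewrite xa /=.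
have ax : a != x by apply/eqP => ax; move: xa; rewrite ax eirr.
have ay : a != y.
  apply/eqP => ay; subst a.
  have zy : z != y by apply/eqP => zy; move: exz; rewrite zy exy.
  move: (hz z zx zy); rewrite !inN [e y z]esym za => hh.
  by move: exz; rewrite hh.
by move: (hz a ax ay); rewrite !inN xa.
Qed.

Lemma witness x y : N x != N y -> ~~ (univ x && univ y) ->
  exists w, [&& w \in symd x y, w != x & w != y].
Proof.
move=> nxy nu.
case: (boolP [exists w, [&& w \in symd x y, w != x & w != y]]) => [/existsP // | hno].
exfalso; move/negP: nu; apply.
have hz : forall z, z != x -> z != y -> (z \in N x) = (z \in N y).
  move=> z zx zy; apply/idP/idP => h; apply/negPn/negP => h'; move/existsP: hno; apply;
    exists z; rewrite zx zy !andbT /symd !inE.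
    by move: h h'; rewrite !inN => -> /negbTE ->.
  by move: h h'; rewrite !inN => -> /negbTE ->; rewrite orbT.
have exy : e x y.
  move: nxy; apply: contraR => nexy; apply/eqP/setP => z.
  case: (z =P x) => [-> | /eqP zx].
    by rewrite !inN eirr esym (negbTE nexy).
  case: (z =P y) => [-> | /eqP zy]; last by apply: hz.
  by rewrite !inN eirr (negbTE nexy).
rewrite (univ_of exy hz) /=.
apply: (univ_of (x:=y) (y:=x)); first by rewrite esym.
by move=> z zy zx; rewrite hz.
Qed.

Lemma univ_clique : is_clique e [set x | univ x].
Proof.
apply/cliqueP => x y; rewrite !inE => /forallP ux _ xy.
by move: (ux y); rewrite eq_sym xy.
Qed.

Lemma univ_card : (#|[set x | univ x]| < r)%N.
Proof. exact: Kr_free_lt hfree univ_clique. Qed.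

Lemma nonvac u v : u != v -> ~~ e u v -> eps * (j`!)%:R <= 1.
Proof.
move=> uv euv; have hd := hdense uv euv.
have hn : (0 < n)%N := n_pos u.
have hf := cl_fact e (N u :&: N v) j.
have hp : 0 < (n%:R : Rdefinitions.R) ^+ j by rewrite exprn_gt0 // ltr0n.
rewrite -(ler_pM2r hp) mul1r.
apply: le_trans (_ : (num_cliques_in e (N u :&: N v) j * j`!)%:R <= _).
  by rewrite natrM mulrAC ler_pM2r ?ltr0n ?fact_gt0 // mulrC.
by rewrite -natrX ler_nat.
Qed.

Lemma vc (A : {set T}) : (forall B : {set T}, B \subset A -> exists v, N v :&: A = B) ->
  exists m, (#|A| <= m + r.-1)%N /\ m%:R * eps <= 1.
Proof.
move=> hsh.
case: (set_0Vmem A) => [-> | [a0 a0A]].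
  by exists 0%N; rewrite cards0 mul0r.
have hn : (0 < n)%N := n_pos a0.
pose vf a := odflt a [pick v | N v :&: A == A :\ a].
have vfP : forall a, N (vf a) :&: A = A :\ a.
  move=> a; rewrite /vf; case: pickP => [v /eqP // | none].
  have [v hv] := hsh (A :\ a) (subD1set _ _).
  by move: (none v); rewrite hv eqxx.
set Va := [set a in A | vf a != a].
set Ia := [set a in A | vf a == a].
have cA : #|A| = (#|Va| + #|Ia|)%N.
  rewrite -(cardsID [set a | vf a != a] A); congr (_ + _)%N.
    by apply: eq_card => a; rewrite !inE andbC.
  by apply: eq_card => a; rewrite !inE negbK andbC.
have cI : (#|Ia| < r)%N.
  apply: (Kr_free_lt hfree); apply/cliqueP => a b; rewrite !inE.
  move=> /andP[aA /eqP va] /andP[bA _] ab.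
  have : b \in N (vf a) :&: A by rewrite vfP !inE eq_sym ab.
  by rewrite va !inE => /andP[].
exists #|Va|; split; first by rewrite cA leq_add2l; move: cI hr; clear; lia.
pose Z a := cl e (N a :&: N (vf a)) j.
have hZ : forall a, a \in Va -> eps * (n%:R) ^+ j <= #|Z a|%:R.
  move=> a; rewrite inE => /andP[aA va].
  have av : a != vf a by rewrite eq_sym.
  apply: hdense => //; rewrite -inN; apply/negP => h.
  have : a \in N (vf a) :&: A.
    by rewrite inE aA andbT inN esym -inN.
  by rewrite vfP !inE eqxx.
have hsum : (\sum_(a in Va) #|Z a| <= #|cl e setT j|)%N.
  apply: sum_disjoint_le.
    move=> a _; apply/subsetP => K; rewrite !inE => /and3P[_ -> ->].
    by rewrite subsetT.
  move=> a b K aV bV Ka Kb; apply/eqP/negPn/negP => ab.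
  move: Ka Kb; rewrite !inE => /and3P[sKa cK /eqP hK] /and3P[sKb _ _].
  have ebv : e (vf b) a.
    move: bV aV; rewrite !inE => /andP[bA _] /andP[aA _].
    have : a \in N (vf b) :&: A by rewrite vfP !inE aA andbT.
    by rewrite inE inN => /andP[].
  apply: (no_ext ebv _ cK hK); apply/subsetP => x xK.
  move: (subsetP sKa x xK) (subsetP sKb x xK); rewrite !inE.
  by move=> /andP[-> _] /andP[_ ->].
have hp : 0 < (n%:R : Rdefinitions.R) ^+ j by rewrite exprn_gt0 // ltr0n.
rewrite -(ler_pM2r hp) mul1r.
apply: le_trans (_ : (\sum_(a in Va) #|Z a|)%:R <= _); last first.
  rewrite -natrX ler_nat; apply: leq_trans hsum _; exact: cl_le.
rewrite natr_sum -mulrA -sum1_card natr_sum mulr_suml.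
by apply: ler_sum => a aV; rewrite mul1r; apply: hZ.
Qed.


Variable k : nat.
Hypothesis hk2 : (2 <= k)%N.
Hypothesis hk1 : 1 < eps * (k.+1)%:R.

Lemma lt_k (m : nat) : m%:R * eps <= 1 -> (m <= k)%N.
Proof.
move=> h; rewrite -ltnS -(ltr_nat Rdefinitions.R).
rewrite -(ltr_pM2r heps); apply: le_lt_trans h _; by rewrite mulrC.
Qed.

Lemma main_bound :
  (#|[set N x | x in T]| <= 2 ^ (16 * (k + r) * (trunc_log 2 k).+1).+1)%N.
Proof.
set L := (trunc_log 2 k).+1.
set q := (16 * (k + r) * L)%N.
set Mu := [set N x | x in [set x | univ x]].
set Mn := [set N x | x in [set x | ~~ univ x]].
have hM : [set N x | x in T] \subset Mn :|: Mu.
  apply/subsetP => A /imsetP[x _ ->]; case ux: (univ x).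
    by rewrite inE; apply/orP; right; apply/imsetP; exists x; rewrite ?inE.
  by rewrite inE; apply/orP; left; apply/imsetP; exists x; rewrite ?inE ?ux.
have cMu : (#|Mu| < r)%N.
  by apply: leq_ltn_trans (leq_imset_card _ _) univ_card.
have hrq : (r <= 2 ^ q)%N.
  apply: ltnW; apply: leq_trans (ltn_expl r (isT : (1 < 2)%N)) _.
  by rewrite leq_exp2l // /q /L; nia.
suff cMn : (#|Mn| < 2 ^ q)%N.
  apply: leq_trans (subset_leq_card hM) _; apply: leq_trans (leq_card_setU _ _) _.
  by rewrite expnS mul2n -addnn; apply: leq_add; [apply: ltnW|apply: ltnW; apply: leq_trans hrq].
rewrite ltnNge; apply/negP => hge.
have [M' [sM' cM']] := subset_card_exact hge.
have hL2 : (2 <= L)%N by rewrite /L ltnS trunc_log_gt0.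
have hkL : (k < 2 ^ L)%N by apply: trunc_log_ltn.
have : (0 < #|M'|)%N by rewrite cM' expn_gt0.
case/card_gt0P => A0 /(subsetP sM') /imsetP[x0]; rewrite inE => nu0 _.
have hn : (0 < n)%N := n_pos x0.
have hrk : (r <= k + 2)%N.
  move: nu0; rewrite negb_forall => /existsP[z]; rewrite negb_imply => /andP[zx ez].
  have xz : x0 != z by rewrite eq_sym.
  have hj : (j`! <= k)%N by apply: lt_k; rewrite mulrC; exact: nonvac xz ez.
  by move: (leq_trans (fact_geq _) hj) hr; clear; lia.
have hsepM : forall A B, A \in M' -> B \in M' -> A != B ->
    (n <= k.+1 * #|(A :\: B) :|: (B :\: A)|)%N.
  move=> A B AM BM AB.
  move: (subsetP sM' A AM) (subsetP sM' B BM).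
  move=> /imsetP[x]; rewrite inE => ux eA /imsetP[y]; rewrite inE => uy eB.
  subst A B.
  have nu : ~~ (univ x && univ y) by rewrite negb_and ux.
  have [w /and3P[wD wx wy]] := witness AB nu.
  have hs := sep wD wx wy.
  rewrite -(ler_nat Rdefinitions.R) natrM.
  have hnr : 0 < (n%:R : Rdefinitions.R) by rewrite ltr0n.
  apply: ltW; apply: (@lt_le_trans _ _ (eps * k.+1%:R * n%:R)).
    by rewrite -{1}(mul1r n%:R) ltr_pM2r.
  rewrite mulrC mulrA [_ * eps]mulrC -mulrA mulrA mulrC ler_pM2l ?ltr0n //; exact: hs.
set t := (2 * q + 1)%N.
set s := (k * t)%N.
pose P := [pred p : {set T} * {set T} | [&& p.1 \in M', p.2 \in M' & p.1 != p.2]].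
pose D := fun p : {set T} * {set T} => (p.1 :\: p.2) :|: (p.2 :\: p.1).
have hsum : (\sum_(p | P p) (n - #|D p|) ^ s < n ^ s)%N.
  have hk0 : (0 < k)%N by apply: leq_trans hk2.
  rewrite -(ltn_pmul2r (_ : 0 < k.+1 ^ s)%N) ?expn_gt0 //.
  have h1 : ((\sum_(p | P p) (n - #|D p|) ^ s) * k.+1 ^ s <= \sum_(p | P p) (k * n) ^ s)%N.
    rewrite big_distrl /=; apply: leq_sum => p /and3P[p1 p2 p12].
    rewrite -expnMn; apply: leq_expr.
    have := hsepM _ _ p1 p2 p12; rewrite -/(D p); move: #|D p| => d hd.
    exact: ar6.
  apply: leq_ltn_trans h1 _.
  rewrite sum_nat_cond_const.
  have hP : (#|[set p | P p]| <= 2 ^ q * 2 ^ q)%N.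
    rewrite -cM' -cardsX; apply: subset_leq_card; apply/subsetP => p.
    by rewrite !inE => /and3P[-> -> _].
  apply: leq_ltn_trans (leq_mul hP (leqnn _)) _.
  have hb := bern_pow t hk0; rewrite -/s in hb.
  rewrite expnMn mulnA -expnD [(n ^ s * _)%N]mulnC.
  rewrite ltn_pmul2r ?expn_gt0 ?hn //.
  apply: leq_trans hb; rewrite ltn_pmul2r ?expn_gt0 ?hk0 // ltn_exp2l //.
  by rewrite /t addnn -mul2n addn1.
have [f hf] := sample_exists hsum.
set S := [set f i | i : 'I_s].
have cS : (#|S| <= s)%N.
  by apply: leq_trans (leq_imset_card _ _) _; rewrite ?cardsT ?cardT ?card_ord ?size_enum_ord.
set Fam := [set A :&: S | A in M'].
have cFam : #|Fam| = (2 ^ q)%N.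
  rewrite -cM'; apply: card_in_imset => A B AM BM hAB; apply/eqP.
  apply/negPn/negP => AB.
  have hP : P (A, B) by rewrite /= AM BM AB.
  have [i hi] := hf (A, B) hP.
  have fS : f i \in S by apply/imsetP; exists i.
  move: hi; rewrite /D /= !inE.
  have := congr1 (fun X : {set T} => f i \in X) hAB; rewrite /= !inE fS !andbT => ->.
  by case: (f i \in B).
have hsh : shset Fam \subset [set Y : {set T} | (Y \subset S) && (#|Y| <= k + r.-1)%N].
  apply/subsetP => Y; rewrite !inE => hY.
  have [A' /imsetP[A AM ->] sY] := shatters_sub hY.
  have sYS : Y \subset S by apply: fintype.subset_trans sY (subsetIr _ _).
  rewrite sYS /=.
  have [m [hm1 hm2]] : exists m, (#|Y| <= m + r.-1)%N /\ m%:R * eps <= 1.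
    apply: vc => B sB.
    have [A2 /imsetP[A3 A3M ->] hA3] := (shattersP _ _ hY) B sB.
    move: (subsetP sM' A3 A3M) => /imsetP[v _ eA3]; exists v.
    by rewrite -hA3 eA3 -setIA (setIidPr sYS).
  by apply: leq_trans hm1 _; rewrite leq_add2r; apply: lt_k.
have := pajor Fam; rewrite cFam => h1.
have := leq_trans h1 (subset_leq_card hsh).
move/(fun h => leq_trans h (small_subsets S (k + r.-1))) => h2.
have h3 : ((#|S|.+1) ^ (k + r.-1) <= (s.+1) ^ (k + r.-1))%N by apply: leq_expr.
have := arith hk2 hr hrk hkL hL2; rewrite -/L -/q -/t -/s => h4.
by move: (leq_trans h2 h3) => h5; move: (leq_ltn_trans h5 h4); rewrite ltnn.
Qed.


End Graph.


Section Quotient.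
Variables (T : finType) (e : rel T) (r : nat) (eps : Rdefinitions.R).
Hypothesis esym : symmetric e.
Hypothesis eirr : irreflexive e.
Hypothesis hr : (3 <= r)%N.
Hypothesis heps : 0 < eps.
Hypothesis hfree : Kr_free e r.
Hypothesis hdense : forall u v : T, u != v -> ~~ e u v ->
       eps * (#|T|%:R) ^+ (r - 2) <=
         (num_cliques_in e (nbhd e u :&: nbhd e v) (r - 2))%:R.

Local Notation N := (nbhd e).

Definition QM := [set N x | x in T].
Definition QU := {A : {set T} | A \in QM}.

Lemma qphi_proof (x : T) : N x \in QM.
Proof. by apply/imsetP; exists x. Qed.

Definition qphi (x : T) : QU := exist _ (N x) (qphi_proof x).

Lemma repP (a : QU) : exists x, N x == val a.
Proof. by case: a => A /= /imsetP[x _ ->]; exists x. Qed.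

Definition qg (a : QU) : T := xchoose (repP a).

Lemma qgP a : N (qg a) = val a.
Proof. exact/eqP/(xchooseP (repP a)). Qed.

Lemma qphig a : qphi (qg a) = a.
Proof. by apply: val_inj; rewrite /= qgP. Qed.

Definition qf : rel QU := fun a b => e (qg a) (qg b).

Lemma nbhd_eq_e y x x' : N x = N x' -> e x y = e x' y.
Proof.
move=> h; have := congr1 (fun X : {set T} => y \in X) h.
by rewrite /= !inE.
Qed.

Lemma qfE x y : e x y = qf (qphi x) (qphi y).
Proof.
rewrite /qf; have hx : N (qg (qphi x)) = N x by rewrite qgP.
have hy : N (qg (qphi y)) = N y by rewrite qgP.
have h1 : e (qg (qphi x)) (qg (qphi y)) = e x (qg (qphi y)) := nbhd_eq_e (qg (qphi y)) hx.
have h2 : e (qg (qphi y)) x = e y x := nbhd_eq_e x hy.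
by rewrite h1 [RHS]esym h2 esym.
Qed.

Lemma f_sym : symmetric qf.
Proof. by move=> a b; rewrite /qf esym. Qed.

Lemma f_irr : irreflexive qf.
Proof. by move=> a; rewrite /qf eirr. Qed.

Lemma qphi_neq x y : e x y -> qphi x != qphi y.
Proof.
move=> exy; apply/eqP => h; move: exy; rewrite qfE h.
by rewrite f_irr.
Qed.

Lemma f_Kr_free : Kr_free qf r.
Proof.
move=> A cA; apply/negP => /eqP hA.
have ginj : injective qg.
  by move=> a b h; rewrite -(qphig a) -(qphig b) h.
have cK : is_clique e (qg @: A).
  apply/cliqueP => x y /imsetP[a aA ->] /imsetP[b bA ->] ab.
  have ab' : a != b by apply: contraNneq ab => ->.
  by have := (cliqueP _ _ cA) a b aA bA ab'; rewrite /qf.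
have := Kr_free_lt hfree cK.
by rewrite card_imset // hA ltnn.
Qed.

Lemma add_edge_sym a b : symmetric (add_edge qf a b).
Proof.
move=> x y; rewrite /add_edge f_sym; case: (qf y x) => //=.
by case: (x == a); case: (x == b); case: (y == a); case: (y == b).
Qed.

Lemma f_maximal : maximal_Kr_free qf r.
Proof.
split; first exact: f_Kr_free.
move=> a b ab nfab.
set x := qg a; set y := qg b.
have xy : x != y by apply: contraNneq ab => h; rewrite -(qphig a) -(qphig b) -/x -/y h.
have nexy : ~~ e x y by [].
have [K] := exists_clique heps hdense xy nexy.
rewrite inE => /and3P[sK cK /eqP hK].
have Kx : forall z, z \in K -> e x z.
  by move=> z /(subsetP sK); rewrite !inE => /andP[].
have Ky : forall z, z \in K -> e y z.
  by move=> z /(subsetP sK); rewrite !inE => /andP[].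
have phix : qphi x = a by rewrite qphig.
have phiy : qphi y = b by rewrite qphig.
have cphi : #|qphi @: K| = (r - 2)%N.
  rewrite -hK; apply: card_in_imset => z1 z2 z1K z2K h.
  apply/eqP; apply/negPn/negP => z12.
  by move: (qphi_neq ((cliqueP _ _ cK) z1 z2 z1K z2K z12)); rewrite h eqxx.
have aK : a \notin qphi @: K.
  apply/negP => /imsetP[z zK ez]; move: (qphi_neq (Kx z zK)).
  by rewrite phix ez eqxx.
have bK : b \notin qphi @: K.
  apply/negP => /imsetP[z zK ez]; move: (qphi_neq (Ky z zK)).
  by rewrite phiy ez eqxx.
exists (a |: (b |: qphi @: K)); split; last first.
  rewrite !cardsU1 !inE negb_or ab aK bK cphi /=; lia.
apply: (clique_add (add_edge_sym a b)).
  apply: (clique_add (add_edge_sym a b)).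
    apply/cliqueP => u v /imsetP[z1 z1K ->] /imsetP[z2 z2K ->] uv.
    have z12 : z1 != z2 by apply: contraNneq uv => ->.
    by rewrite /add_edge -qfE ((cliqueP _ _ cK) z1 z2 z1K z2K z12).
  move=> u /imsetP[z zK ->] _.
  by rewrite /add_edge -phiy -qfE Ky.
move=> u; rewrite !inE => /orP[/eqP -> _ | /imsetP[z zK ->] _].
  by rewrite /add_edge !eqxx orbT.
by rewrite /add_edge -phix -qfE Kx.
Qed.

Lemma f_blowup : is_blowup_of e qf.
Proof.
exists qphi; split; last exact: qfE.
by move=> a; exists (qg a); exact: qphig.
Qed.

Lemma card_U : #|{: QU}| = #|QM|.
Proof. by rewrite card_sig. Qed.

End Quotient.


Lemma ar7 k r L : (2 <= k)%N -> (1 <= L)%N ->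
  ((16 * (k + r) * L).+1 <= 17 * (k + r) * L)%N.
Proof. move=> *; nia. Qed.

Lemma real_final (eps : Rdefinitions.R) (r k L : nat) :
  0 < eps -> (2 <= k)%N -> k%:R <= eps^-1 -> (2 ^ L <= k * k)%N ->
  (17 * (k + r) * L)%:R <= 34 / ln 2 * (eps^-1 + r%:R) * ln (eps^-1).
Proof.
move=> heps hk hke hL.
have l2 : 0 < ln (2 : Rdefinitions.R) by apply: ln_gt0; rewrite ltr1n.
have hi : 0 < eps^-1 by rewrite invr_gt0.
have hLl : L%:R * ln (2 : Rdefinitions.R) <= 2 * ln (eps^-1).
  have e1 : ln (eps^-1 ^+ 2) = 2 * ln (eps^-1) by rewrite lnXn // mulr2n; ring.
  have e2 : ln ((2 : Rdefinitions.R) ^+ L) = L%:R * ln 2 by rewrite lnXn // mulr_natl.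
  rewrite -e1 -e2 ler_ln ?posrE ?exprn_gt0 //.
  apply: le_trans (_ : (k * k)%:R <= _); first by rewrite -natrX ler_nat.
  by rewrite natrM expr2 ler_pM // ler0n.
have hL' : L%:R <= 2 * ln (eps^-1) / ln 2 by rewrite ler_pdivlMr.
have hX : 0 <= eps^-1 + r%:R by rewrite addr_ge0 // ?ltW // ler0n.
rewrite !natrM natrD.
apply: le_trans (_ : 17%:R * (eps^-1 + r%:R) * L%:R <= _).
  by rewrite ler_wpM2r ?ler0n // ler_wpM2l ?ler0n // lerD2r.
apply: le_trans (_ : 17%:R * (eps^-1 + r%:R) * (2 * ln (eps^-1) / ln 2) <= _).
  by rewrite ler_wpM2l // mulr_ge0 // ler0n.
rewrite le_eqVlt; apply/orP; left; apply/eqP.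
have : ln (2 : Rdefinitions.R) != 0 by rewrite gt_eqF.
move: (ln (2 : Rdefinitions.R)) => a ha; field.
by rewrite ha gt_eqF.
Qed.

Theorem theorem1p6 :
  exists C : Rdefinitions.R, 0 < C /\
  forall (r : nat) (eps : Rdefinitions.R) (T : finType) (e : rel T),
    (3 <= r)%N -> 0 < eps -> eps <= 2^-1 ->
    simple_graph e -> Kr_free e r ->
    (forall u v : T, u != v -> ~~ e u v ->
       eps * (#|T|%:R) ^+ (r - 2) <=
         (num_cliques_in e (nbhd e u :&: nbhd e v) (r - 2))%:R) ->
    exists (U : finType) (f : rel U),
      [/\ simple_graph f, maximal_Kr_free f r, is_blowup_of e f &
          (#|U|%:R <= powR 2 (C * (eps^-1 + r%:R) * ln (eps^-1)))].
Proof.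
exists (34 / ln 2); split.
  by rewrite divr_gt0 // ln_gt0 // ltr1n.
move=> r eps T e hr heps hhalf [esym eirr] hfree hdense.
exists (QU e), (qf (e:=e)); split.
- by split; [exact: f_sym | exact: f_irr].
- exact: f_maximal esym eirr hr heps hfree hdense.
- exact: f_blowup esym.
set k := Num.truncn (eps^-1).
have hi : 0 < eps^-1 by rewrite invr_gt0.
have hinv2 : 2 <= eps^-1.
  by rewrite invf_pge ?posrE // ?invr_gt0 //.
have hk2 : (2 <= k)%N by rewrite /k truncn_gt_nat.
have hkle : k%:R <= eps^-1 by rewrite /k truncn_le ltW.
have hk1 : 1 < eps * k.+1%:R.
  have := truncnS_gt (eps^-1); rewrite -/k => h.
  by rewrite -[X in X < _](mulfV (negbT (gt_eqF heps))) ltr_pM2l.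
have hmb := main_bound esym eirr hr heps hfree hdense hk2 hk1.
rewrite card_U.
set L := (trunc_log 2 k).+1 in hmb.
have hL1 : (1 <= L)%N by [].
apply: le_trans (_ : (2 ^ (16 * (k + r) * L).+1)%:R <= _).
  by rewrite ler_nat.
rewrite natrX -powR_mulrn ?ler0n //.
rewrite ler_powR ?ler1n //.
apply: le_trans (@real_final eps r k L heps hk2 hkle _).
  by rewrite ler_nat; apply: ar7.
rewrite /L expnS.
have := trunc_logP (isT : (1 < 2)%N) (leq_trans (isT : (0 < 2)%N) hk2).
move=> h; apply: leq_trans (leq_mul (leqnn 2) h) _.
by rewrite leq_mul2r hk2 orbT.
Qed.
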